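(* Let $\mathcal{F}=\{f_1,\dots,f_{M_0},f_{M_0+1},\dots,f_{M_0+n}\}$ be homogeneous polynomials on $\mathbb{R}^n$ with $f_{M_0+j}(z)=z_j$ for $j=1,\dots,n$ (not necessarily satisfying any further property). Suppose there exists a set $V\subset\mathbb{R}^n$ with $\{0\}\subsetneq V$ such that for every $y\in\mathbb{R}^{M_0+n}\setminus\{0\}$ the restriction to $V$ of $\sum_{k=1}^{M_0+n}y_kf_k$ is either identically zero or changes sign (takes both strictly positive and strictly negative values) on $V$. Then there exists a non-trivial (non-Dirac) $\mu\in\mathbb{M}^{pc}_{\mathcal{F}}(0)$.
   Context: $\mathbb{M}^{pc}_{\mathcal{F}}(0)$ is the set of probability measures $\mu$ on $\mathbb{R}^n$ with $\int z\,d\mu=0$ and $\int f\,d\mu=f(\int z\,d\mu)$ for all $f\in\mathcal{F}$. *)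

(* Defs.v *)
From HB Require Import structures.
From mathcomp Require Import all_boot all_order all_algebra.
From mathcomp Require Import all_classical all_reals all_analysis.
From mathcomp Require mpoly.

Set Implicit Arguments.
Unset Strict Implicit.
Unset Printing Implicit Defensive.
Import Order.TTheory GRing.Theory Num.Theory.

Local Open Scope classical_set_scope.
Local Open Scope ring_scope.

(* R^n is modelled as [n.-tuple R], with its canonical (product = Borel)
   sigma-algebra from mathcomp-analysis. *)

Definition peval (R : realType) (n : nat) (p : mpoly.mpoly n R) (z : n.-tuple R) : R :=
  mpoly.meval (fun i => tnth z i) p.

Definition homogeneous (R : realType) (n : nat) (p : mpoly.mpoly n R) : Prop :=
  exists d : nat, p \in @mpoly.ishomog1 n R d (mpoly.mpoly_mdeg__canonical__mpoly_Measure n).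

Definition coord_poly (R : realType) (n : nat) (j : 'I_n) : mpoly.mpoly n R :=
  mpoly.mpolyX R (mpoly.mnm1 j).

Definition zero_vec (R : realType) (n : nat) : n.-tuple R := [tuple (0 : R) | _ < n].

(* M^{pc}_F(x): probability measures mu on R^n such that the coordinates are
   mu-integrable with  int z dmu = x, and every f in F is mu-integrable with
   int f dmu = f(int z dmu) = f(x). *)
Definition Mpc (R : realType) (n : nat) (F : set (mpoly.mpoly n R))
    (x : n.-tuple R) (mu : probability (n.-tuple R) R) : Prop :=
  (forall j : 'I_n,
      mu.-integrable setT (fun z : n.-tuple R => (tnth z j)%:E) /\
      (\int[mu]_z (tnth z j)%:E = (tnth x j)%:E)%E) /\
  (forall f, F f ->
      mu.-integrable setT (fun z => (peval f z)%:E) /\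
      (\int[mu]_z (peval f z)%:E = (peval f x)%:E)%E).

Definition nontrivial (R : realType) (n : nat) (mu : probability (n.-tuple R) R) : Prop :=
  exists A : set (n.-tuple R), measurable A /\ mu A <> \d_(zero_vec R n) A.

(* Main.v *)
Require Import Defs.
From HB Require Import structures.
From mathcomp Require Import all_boot all_order all_algebra.
From mathcomp Require Import all_classical all_reals all_analysis.
From mathcomp Require Import lra measurable_realfun.
From mathcomp Require mpoly.

Set Implicit Arguments.
Unset Strict Implicit.
Unset Printing Implicit Defensive.
Import Order.TTheory GRing.Theory Num.Theory.

Local Open Scope classical_set_scope.
Local Open Scope ring_scope.
Section Sep.
Variable R : realType.

Definition dot m (y a : 'I_m -> R) := \sum_(i < m) y i * a i.
Definition vadd m (a b : 'I_m -> R) := fun i => a i + b i.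
Definition vscale m (c : R) (a : 'I_m -> R) := fun i => c * a i.
Definition vzero m : 'I_m -> R := fun _ => 0.
Arguments vzero : clear implicits.

Definition ext m (u : 'I_m -> R) (t : R) : 'I_m.+1 -> R :=
  fun i => match unlift ord_max i with Some j => u j | None => t end.
Definition ini m (a : 'I_m.+1 -> R) : 'I_m -> R := fun i => a (widen_ord (leqnSn m) i).
Definition lst m (a : 'I_m.+1 -> R) : R := a ord_max.

Lemma lift_widen m (j : 'I_m) : lift ord_max j = widen_ord (leqnSn m) j.
Proof. by apply: val_inj => /=; rewrite /bump leqNgt ltn_ord. Qed.

Lemma ext_widen m u t (j : 'I_m) : ext u t (widen_ord (leqnSn m) j) = u j.
Proof. by rewrite /ext -lift_widen liftK. Qed.

Lemma ext_max m u t : @ext m u t ord_max = t.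
Proof. by rewrite /ext unlift_none. Qed.

Lemma ext_eta m (a : 'I_m.+1 -> R) : a = ext (ini a) (lst a).
Proof.
apply: funext => i; rewrite /ext /ini /lst.
by case: unliftP => [j ->|->] //; rewrite lift_widen.
Qed.

Lemma ini_ext m u t : ini (@ext m u t) = u.
Proof. by apply: funext => j; rewrite /ini ext_widen. Qed.
Lemma lst_ext m u t : lst (@ext m u t) = t.
Proof. by rewrite /lst ext_max. Qed.

Lemma ext_inj m u t u' t' : @ext m u t = ext u' t' -> u = u' /\ t = t'.
Proof. by move=> e; split; [rewrite -(ini_ext u t) e ini_ext | rewrite -(lst_ext u t) e lst_ext]. Qed.

Lemma ext_add m u t u' t' : vadd (@ext m u t) (ext u' t') = ext (vadd u u') (t + t').
Proof. by apply: funext => i; rewrite /vadd /ext; case: unlift. Qed.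

Lemma ext_scale m c u t : vscale c (@ext m u t) = ext (vscale c u) (c * t).
Proof. by apply: funext => i; rewrite /vscale /ext; case: unlift. Qed.

Lemma ext_zero m : @ext m (vzero m) 0 = vzero m.+1.
Proof. by apply: funext => i; rewrite /vzero /ext; case: unlift. Qed.

Lemma dot_ext m y c (a : 'I_m.+1 -> R) : dot (ext y c) a = dot y (ini a) + c * lst a.
Proof. by rewrite /dot big_ord_recr /= ext_max; congr (_ + _); apply: eq_bigr => i _; rewrite ext_widen. Qed.

Lemma dot_add m (y a b : 'I_m -> R) : dot y (vadd a b) = dot y a + dot y b.
Proof. by rewrite /dot -big_split; apply: eq_bigr => i _; rewrite /vadd mulrDr. Qed.

Lemma dot_scale m (y a : 'I_m -> R) c : dot y (vscale c a) = c * dot y a.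
Proof. by rewrite /dot mulr_sumr; apply: eq_bigr => i _; rewrite /vscale mulrCA. Qed.

Lemma dot0 m (a : 'I_m -> R) : dot (vzero m) a = 0.
Proof. by rewrite /dot big1 // => i _; rewrite /vzero mul0r. Qed.

Definition cone m (K : ('I_m -> R) -> Prop) :=
  [/\ K (vzero m), (forall a b, K a -> K b -> K (vadd a b)) &
      (forall c a, 0 <= c -> K a -> K (vscale c a))].

Lemma ext_split m u t : @ext m u t = vadd (ext u 0) (ext (vzero m) t).
Proof. by apply: funext => i; rewrite /vadd /ext /vzero; case: unlift => *; rewrite ?addr0 ?add0r. Qed.

Lemma sep m (K : ('I_m -> R) -> Prop) : cone K -> (exists p, ~ K p) ->
  exists y, (exists i, y i <> 0) /\ forall a, K a -> 0 <= dot y a.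
Proof.
elim: m K => [|m IH] K [HK0 KD KZ] [p Np].
  by exfalso; apply: Np; have -> : p = vzero 0 by apply: funext => -[].
have [Hpos|] := pselect (forall a, K a -> 0 <= lst a).
  exists (ext (vzero m) 1); split; first by exists ord_max; rewrite ext_max; apply/eqP; exact: oner_neq0.
  by move=> a Ka; rewrite dot_ext dot0 add0r mul1r; exact: Hpos.
move=> /existsNP [k2] /not_implyP [Kk2] /negP; rewrite -ltNge => t2lt.
have [Hneg|] := pselect (forall a, K a -> lst a <= 0).
  exists (ext (vzero m) (-1)); split.
    by exists ord_max; rewrite ext_max; apply/eqP; rewrite oppr_eq0 oner_neq0.
  by move=> a Ka; rewrite dot_ext dot0 add0r mulN1r oppr_ge0; exact: Hneg.
move=> /existsNP [k1] /not_implyP [Kk1] /negP; rewrite -ltNge => t1gt.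
pose K0 u := K (ext u 0).
have cK0 : cone K0.
  split; first by rewrite /K0 ext_zero.
  - by move=> a b Ka Kb; rewrite /K0 -[0]addr0 -ext_add; exact: KD.
  - by move=> c a c0 Ka; rewrite /K0 -[0](mulr0 c) -ext_scale; exact: KZ.
have [u0 Nu0] : exists u, ~ K0 u.
  apply: contrapT => H.
  have allK0 : forall u, K0 u by move=> u; apply: contrapT => nu; apply: H; exists u.
  have Hk (k : 'I_m.+1 -> R) : K k -> K (ext (vzero m) (lst k)).
    move=> Kk.
    have -> : ext (vzero m) (lst k) = vadd k (ext (vscale (-1) (ini k)) 0).
      rewrite {2}(ext_eta k) ext_add addr0; congr ext.
      by apply: funext => i; rewrite /vadd /vscale /vzero mulN1r subrr.
    exact: KD Kk (allK0 _).
  have Kline : forall s, K (ext (vzero m) s).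
    move=> s; have [s0|s0] := leP 0 s.
      have -> : ext (vzero m) s = vscale (s / lst k1) (ext (vzero m) (lst k1)).
        rewrite ext_scale divfK; last by rewrite gt_eqF.
        by congr ext; apply: funext => i; rewrite /vscale /vzero mulr0.
      by apply: KZ; [rewrite divr_ge0 // ltW | exact: Hk].
    have -> : ext (vzero m) s = vscale (s / lst k2) (ext (vzero m) (lst k2)).
      rewrite ext_scale divfK; last by rewrite lt_eqF.
      by congr ext; apply: funext => i; rewrite /vscale /vzero mulr0.
    by apply: KZ; [rewrite ler_ndivlMr // mul0r ltW | exact: Hk].
  apply: Np; rewrite (ext_eta p) ext_split; apply: KD; [exact: allK0 | exact: Kline].
have [y' [[i0 yi0] Hy']] := IH K0 cK0 (ex_intro _ u0 Nu0).
pose phi a := dot y' (ini a).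
have key : forall a, K a -> lst a = 0 -> 0 <= phi a.
  move=> a Ka la0; apply: Hy'; rewrite /K0 -la0 -ext_eta //.
have phiD a b : phi (vadd a b) = phi a + phi b by rewrite /phi -dot_add.
have phiZ c a : phi (vscale c a) = c * phi a by rewrite /phi -dot_scale.
pose L := [set x | exists a, K a /\ 0 < lst a /\ x * lst a = - phi a].
have ub : forall b, K b -> lst b < 0 -> forall x, L x -> x <= phi b / (- lst b).
  move=> b Kb tb x [a [Ka [ta xa]]].
  rewrite ler_pdivlMr ?oppr_gt0 //.
  have := key (vadd (vscale (- lst b) a) (vscale (lst a) b)).
  rewrite phiD !phiZ /lst /vadd /vscale.
  move=> /(_ _ _) H.
  have : 0 <= - b ord_max * phi a + a ord_max * phi b.
    apply: H; last by lra.
    by apply: KD; apply: KZ => //; [rewrite oppr_ge0 ltW | rewrite ltW].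
  move=> h; rewrite /lst in xa ta tb; nra.
have Lne : L !=set0.
  exists (- phi k1 / lst k1), k1; split => //; split => //.
  by rewrite divfK // gt_eqF.
have hsL : has_sup L by split => //; exists (phi k2 / - lst k2) => x Lx; exact: ub.
exists (ext y' (sup L)); split.
  by exists (widen_ord (leqnSn m) i0); rewrite ext_widen.
move=> a Ka; rewrite dot_ext -/(phi a).
case: (ltgtP (lst a) 0) => ta.
- have : sup L <= phi a / - lst a by apply: ge_sup => // x Lx; exact: ub.
  rewrite ler_pdivlMr ?oppr_gt0 //; nra.
- have : - phi a / lst a <= sup L.
    apply: sup_upper_bound => //; exists a; split => //; split => //.
    by rewrite divfK // gt_eqF.
  rewrite ler_pdivrMr //; nra.
- by rewrite ta mulr0 addr0; exact: key.
Qed.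

Lemma dot_self0 m (w : 'I_m -> R) : dot w w = 0 -> forall i, w i = 0.
Proof.
move=> h i; apply/eqP; rewrite -sqrf_eq0 expr2; apply/eqP.
by apply: (@psumr_eq0P _ _ xpredT (fun i => w i * w i)) => // j _; rewrite -expr2 sqr_ge0.
Qed.

Section Cone.
Variables (T : eqType) (m : nat) (Phi : T -> 'I_m -> R) (V : set T).
Hypothesis H : forall y, (forall z, V z -> 0 <= dot y (Phi z)) ->
  forall z, V z -> dot y (Phi z) = 0.

Definition good (l : seq (R * T)) := forall p, p \in l -> 0 <= p.1 /\ V p.2.
Definition comb (l : seq (R * T)) := fun k => \sum_(p <- l) p.1 * Phi p.2 k.

Lemma dot_comb w l : dot w (comb l) = \sum_(p <- l) p.1 * dot w (Phi p.2).
Proof.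
rewrite /dot /comb.
under eq_bigr do rewrite mulr_sumr.
rewrite exchange_big /=; apply: eq_bigr => p _.
by rewrite mulr_sumr; apply: eq_bigr => i _; rewrite mulrCA.
Qed.

Lemma dotC (a b : 'I_m -> R) : dot a b = dot b a.
Proof. by apply: eq_bigr => i _; rewrite mulrC. Qed.

Lemma cone_main v : V v -> exists l, good l /\ forall k, Phi v k + comb l k = 0.
Proof.
move=> Vv.
pose Kt x := exists l w, [/\ good l, (forall z, V z -> dot w (Phi z) = 0) & x = vadd (comb l) w].
have cKt : cone Kt.
  split.
  - exists [::], (vzero m); split => //.
    + by move=> z _; rewrite dot0.
    + by apply: funext => k; rewrite /vadd /comb /vzero big_nil addr0.
  - move=> a b [l1 [w1 [g1 o1 ->]]] [l2 [w2 [g2 o2 ->]]].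
    exists (l1 ++ l2), (vadd w1 w2); split.
    + by move=> p; rewrite mem_cat => /orP [] ?; [exact: g1 | exact: g2].
    + by move=> z Vz; rewrite dotC dot_add dotC o1 // dotC o2 // addr0.
    + by apply: funext => k; rewrite /vadd /comb big_cat /=; lra.
  - move=> c a c0 [l [w [g o ->]]].
    exists (map (fun p => (c * p.1, p.2)) l), (vscale c w); split.
    + move=> p /mapP [q ql ->] /=; have [q0 Vq] := g q ql; split => //; exact: mulr_ge0.
    + by move=> z Vz; rewrite dotC dot_scale dotC o // mulr0.
    + apply: funext => k; rewrite /vadd /vscale /comb big_map mulrDr mulr_sumr.
      by congr (_ + _); apply: eq_bigr => p _; rewrite mulrA.
have allK : forall x, Kt x.
  move=> x; apply: contrapT => nx.
  have [y [[i yi] Hy]] := sep cKt (ex_intro _ x nx).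
  have yS : forall z, V z -> dot y (Phi z) = 0.
    apply: H => z Vz; apply: Hy; exists [:: (1, z)], (vzero m); split.
    + by move=> p; rewrite inE => /eqP -> /=; split.
    + by move=> *; rewrite dot0.
    + by apply: funext => k; rewrite /vadd /comb /vzero big_seq1 /= mul1r addr0.
  have yperp : forall w, (forall z, V z -> dot w (Phi z) = 0) -> dot y w = 0.
    move=> w o.
    have h1 : 0 <= dot y w.
      apply: Hy; exists [::], w; split => //.
      by apply: funext => k; rewrite /vadd /comb big_nil add0r.
    have h2 : 0 <= dot y (vscale (-1) w).
      apply: Hy; exists [::], (vscale (-1) w); split => //.
      + by move=> z Vz; rewrite dotC dot_scale dotC o // mulr0.
      + by apply: funext => k; rewrite /vadd /comb big_nil add0r.
    move: h2; rewrite dot_scale; lra.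
  apply: yi; apply: dot_self0; exact: yperp yS.
have [l [w [g o e]]] := allK (vscale (-1) (Phi v)).
have ww : dot w w = 0.
  have ew : w = vadd (vscale (-1) (Phi v)) (vscale (-1) (comb l)).
    apply: funext => k; have := congr1 (fun f => f k) e.
    rewrite /vadd /vscale /=; lra.
  rewrite {2}ew dot_add !dot_scale o // dot_comb big_seq big1 ?mulr0 ?addr0 // => p pl.
  by rewrite o ?mulr0 //; have [] := g p pl.
exists l; split => // k.
have := congr1 (fun f => f k) e; rewrite /vadd /vscale /= (dot_self0 ww k) addr0.
lra.
Qed.
End Cone.
End Sep.
Section Meas.
Context d (T : measurableType d) (R : realType).
Local Open Scope ereal_scope.

Definition nn (r : R) : {nonneg R} := NngNum (normr_ge0 r).

Fixpoint nu (l : seq (R * T)) : {measure set T -> \bar R} :=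
  match l with
  | [::] => mzero
  | p :: l' => measure_add (mscale (nn p.1) \d_(p.2)) (nu l')
  end.

Lemma nuE l A : nu l A = \sum_(p <- l) (`|p.1|)%:E * \d_(p.2) A.
Proof.
elim: l => [|p l IH] /=; first by rewrite big_nil.
by rewrite /msum !big_ord_recl big_ord0 /= adde0 big_cons IH.
Qed.

Lemma int_nu (l : seq (R * T)) (g : T -> \bar R) : (forall x, 0 <= g x) -> measurable_fun [set: T] g ->
  \int[nu l]_x g x = \sum_(p <- l) (`|p.1|)%:E * g p.2.
Proof.
move=> g0 mg; elim: l => [|p l IH] /=; first by rewrite big_nil integral_measure_zero.
rewrite ge0_integral_measure_add // ge0_integral_mscale // IH big_cons.
by rewrite integral_dirac // diracT mul1e.
Qed.

End Meas.
Section Meas2.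
Context d (T : measurableType d) (R : realType).
Local Open Scope ereal_scope.

Lemma int_nu_real (l : seq (R * T)) (f : T -> R) : measurable_fun [set: T] f ->
  (nu l).-integrable [set: T] (fun x => (f x)%:E) /\
  \int[nu l]_x (f x)%:E = (\sum_(p <- l) `|p.1| * f p.2)%:E.
Proof.
move=> mf.
have mfE : measurable_fun [set: T] (fun x => (f x)%:E) by exact/measurable_EFinP.
split.
  apply/integrableP; split => //.
  have -> : (fun x => `|(f x)%:E|) = (fun x => (`|f x|)%R%:E).
    by apply/funext => x; rewrite abse_EFin.
  rewrite int_nu //; last first.
    by apply/measurable_EFinP; exact: measurableT_comp (@normr_measurable R setT) mf.
  rewrite (eq_bigr (fun p => (`|p.1| * `|f p.2|)%R%:E)); last by move=> p _; rewrite EFinM.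
  by rewrite sumEFin ltry.
rewrite integralE !int_nu; last 4 first.
- by move=> x; exact: funeneg_ge0.
- exact: measurable_funeneg.
- by move=> x; exact: funepos_ge0.
- exact: measurable_funepos.
rewrite (eq_bigr (fun p => (`|p.1| * Num.max (f p.2) 0)%R%:E)); last first.
  by move=> p _; rewrite funeposE -EFin_max EFinM.
rewrite [X in _ - X](eq_bigr (fun p => (`|p.1| * Num.max (- f p.2) 0)%R%:E)); last first.
  by move=> p _; rewrite funenegE -EFinN -EFin_max EFinM.
rewrite !sumEFin -EFinB -sumrB; congr EFin; apply: eq_bigr => p _.
rewrite -mulrBr; congr (_ * _)%R.
case: (lerP 0 (f p.2)) => h.
  by rewrite max_r ?subr0 // oppr_le0.
by rewrite max_l ?sub0r ?opprK // oppr_ge0 ltW.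
Qed.


Lemma nu_setT (l : seq (R * T)) : nu l [set: T] = (\sum_(p <- l) `|p.1|)%:E.
Proof.
rewrite nuE -sumEFin; apply: eq_bigr => p _.
by rewrite diracT mule1.
Qed.

Definition Pl (l : seq (R * T)) (x0 : T) : probability T R :=
  mnormalize (nu l) \d_x0.

Lemma PlE l x0 A : (\sum_(p <- l) `|p.1|)%R = 1%R -> Pl l x0 A = nu l A.
Proof.
move=> s1; rewrite /Pl /= /mnormalize nu_setT s1.
rewrite ifF; first by rewrite /= invr1 mule1.
by rewrite onee_eq0.
Qed.

Lemma Pl_real l x0 (f : T -> R) : (\sum_(p <- l) `|p.1|)%R = 1%R ->
  measurable_fun [set: T] f ->
  (Pl l x0).-integrable [set: T] (fun x => (f x)%:E) /\
  \int[Pl l x0]_x (f x)%:E = (\sum_(p <- l) `|p.1| * f p.2)%:E.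
Proof.
move=> s1 mf; have [i1 e1] := int_nu_real l mf.
have E : \int[Pl l x0]_x (f x)%:E = (\sum_(p <- l) `|p.1| * f p.2)%:E.
  by rewrite -e1; apply: (eq_measure_integral (nu l)) => A _ _; exact: PlE.
have I : (Pl l x0).-integrable [set: T] (fun x => (f x)%:E).
  move/integrableP: i1 => [m1 i1]; apply/integrableP; split => //.
  by rewrite (eq_measure_integral (nu l)) // => A _ _; exact: PlE.
by split.
Qed.

End Meas2.
Local Coercion mpoly.fun_of_multinom : mpoly.multinom >-> Funclass.

Section Poly.
Variables (R : realType) (n : nat).

Lemma pevalE (p : mpoly.mpoly n R) z :
  peval p z = \sum_(m <- mpoly.msupp p) mpoly.mcoeff m p * \prod_(i < n) (tnth z i) ^+ (m i).
Proof. by rewrite /peval mpoly.mevalE. Qed.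

Lemma peval_meas (p : mpoly.mpoly n R) : measurable_fun [set: n.-tuple R] (peval p).
Proof.
rewrite (_ : peval p = fun z => \sum_(m <- mpoly.msupp p) mpoly.mcoeff m p * \prod_(i < n) (tnth z i) ^+ (m i)); last first.
  by apply: funext => z; rewrite pevalE.
apply: measurable_sum => m; apply: measurable_funM; first exact: measurable_cst.
apply: measurable_prod => i _; apply: measurable_funX; exact: measurable_tnth.
Qed.

Lemma tnth_zero i : tnth (zero_vec R n) i = 0.
Proof. by rewrite /zero_vec tnth_mktuple. Qed.

Lemma eq_big_all (I : Type) (s : seq I) (P : pred I) (F G : I -> R) :
  all P s -> (forall i, P i -> F i = G i) -> \sum_(i <- s) F i = \sum_(i <- s) G i.
Proof.
elim: s => [|x s IH] /=; first by rewrite !big_nil.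
by move=> /andP [Px Ps] FG; rewrite !big_cons FG // IH.
Qed.

Lemma hom0 (p : mpoly.mpoly n R) : homogeneous p ->
  peval p (zero_vec R n) = 0 \/ forall z, peval p z = peval p (zero_vec R n).
Proof.
move=> [dg hp].
have H : all (fun m : mpoly.multinom n => mpoly.mdeg m == dg) (mpoly.msupp p).
  by move: hp; rewrite unfold_in.
case: dg H {hp} => [|dg] H.
  right => z; rewrite !pevalE; apply: (eq_big_all H) => m.
  rewrite mpoly.mdeg_eq0 => /eqP ->.
  by congr (_ * _); apply: eq_bigr => i _; rewrite mpoly.mnm0E !expr0.
left; rewrite pevalE (eq_big_all (G := fun _ => 0) H) ?big1 // => m /eqP hm.
rewrite (eq_bigr (fun i => 0 ^+ m i)); last by move=> i _; rewrite tnth_zero.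
by rewrite prodrXr -mpoly.mdegE hm expr0n mulr0.
Qed.

Lemma peval_coord (j : 'I_n) (z : n.-tuple R) : peval (coord_poly R j) z = tnth z j.
Proof. by rewrite /peval /coord_poly mpoly.mevalXU. Qed.

End Poly.

Theorem lemma2 (R : realType) (n M0 : nat)
    (f : 'I_(M0 + n) -> mpoly.mpoly n R)
    (hhom : forall k, homogeneous (f k))
    (hcoord : forall j : 'I_n, f (rshift M0 j) = coord_poly R j)
    (V : set (n.-tuple R))
    (hV0 : V (zero_vec R n))
    (hVne : exists v, V v /\ v <> zero_vec R n)
    (hsign : forall y : 'I_(M0 + n) -> R, (exists k, y k <> 0) ->
       let g := fun z => \sum_(k < M0 + n) y k * peval (f k) z in
       (forall z, V z -> g z = 0) \/
       ((exists z, V z /\ 0 < g z) /\ (exists z, V z /\ g z < 0))) :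
  exists mu : probability (n.-tuple R) R,
    Mpc (range f) (zero_vec R n) mu /\ nontrivial mu.
Proof.
pose Phi (z : n.-tuple R) : 'I_(M0 + n) -> R := fun k => peval (f k) z.
have H : forall y, (forall z, V z -> 0 <= dot y (Phi z)) ->
    forall z, V z -> dot y (Phi z) = 0.
  move=> y hy.
  case: (pselect (exists k, y k <> 0)) => [ex|nex].
    case: (hsign y ex) => [h|[_ [z [Vz gz]]]]; first exact: h.
    by have := hy z Vz; rewrite /dot /Phi leNgt gz.
  move=> z _; rewrite /dot big1 // => i _.
  have -> : y i = 0 by apply: contrapT => yi; apply: nex; exists i.
  by rewrite mul0r.
have dot_delta : forall (k : 'I_(M0 + n)) c (a : 'I_(M0 + n) -> R),
    dot (fun i => if i == k then c else 0) a = c * a k.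
  move=> k c a; rewrite /dot (bigD1 k) //= eqxx big1 ?addr0 // => i /negbTE ->.
  by rewrite mul0r.
have f0 : forall k, peval (f k) (zero_vec R n) = 0.
  move=> k; case: (hom0 (hhom k)) => // hc.
  set c := peval (f k) (zero_vec R n).
  have h := H (fun i => if i == k then c else 0).
  have : dot (fun i => if i == k then c else 0) (Phi (zero_vec R n)) = 0.
    apply: h => // z _; rewrite dot_delta /Phi hc -/c -expr2; exact: sqr_ge0.
  by rewrite dot_delta /Phi -/c => /eqP; rewrite mulf_eq0 orbb => /eqP.
have [v [Vv vne0]] := hVne.
have [l [gl hl]] := cone_main H Vv.
pose L := (1, v) :: l.
pose Lam := \sum_(p <- L) p.1.
have Lge0 : forall p, p \in L -> 0 <= p.1.
  move=> p; rewrite inE => /orP [/eqP -> //|pl]; by have [] := gl p pl.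
have Lam_gt0 : 0 < Lam.
  have : 0 <= \sum_(p <- l) p.1.
    by rewrite big_seq sumr_ge0 // => p pl; have [] := gl p pl.
  rewrite /Lam big_cons /=; lra.
pose L' := map (fun p => (p.1 / Lam, p.2)) L.
have s1 : \sum_(p <- L') `|p.1| = 1.
  rewrite big_map /= -(divff (lt0r_neq0 Lam_gt0)) /Lam mulr_suml.
  rewrite [in RHS]big_seq [in LHS]big_seq; apply: eq_bigr => p pL.
  by rewrite ger0_norm // divr_ge0 ?(Lge0 p pL) // ltW.
have s0 : forall k, \sum_(p <- L') `|p.1| * Phi p.2 k = 0.
  move=> k; rewrite big_map /=.
  rewrite (eq_big_seq (fun p => Lam^-1 * (p.1 * Phi p.2 k))); last first.
    move=> p pL; rewrite ger0_norm; last by rewrite divr_ge0 ?(Lge0 p pL) // ltW.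
    by rewrite mulrAC mulrC mulrA.
  rewrite -mulr_sumr big_cons /= mul1r.
  by have := hl k; rewrite /comb => ->; rewrite mulr0.
exists (Pl L' (zero_vec R n)); split.
  have fpart : forall k, (Pl L' (zero_vec R n)).-integrable [set: n.-tuple R]
        (fun z => (peval (f k) z)%:E) /\
      (\int[Pl L' (zero_vec R n)]_z (peval (f k) z)%:E = (peval (f k) (zero_vec R n))%:E)%E.
    move=> k; have [I E] := Pl_real (zero_vec R n) s1 (peval_meas (f k)).
    by split => //; rewrite E f0; have := s0 k; rewrite /Phi => ->.
  split.
    move=> j; have [I E] := fpart (rshift M0 j).
    rewrite hcoord in I E.
    under eq_fun do rewrite -peval_coord.
    by rewrite -[tnth _ j](peval_coord j).
  by move=> _ [k _ <-]; exact: fpart.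
have [j vj] : exists j, tnth v j <> 0.
  apply: contrapT => nj; apply: vne0; apply: eq_from_tnth => j.
  rewrite tnth_zero; apply: contrapT => h; apply: nj; by exists j.
pose A := [set z : n.-tuple R | tnth z j <> 0].
have mA : measurable A.
  have := measurable_tnth j measurableT (measurableC (measurable_set1 (0 : R))).
  by rewrite setTI.
exists A; split => //.
rewrite PlE // diracE memNset; last by rewrite /A /= tnth_zero.
rewrite nuE big_cons /= diracE mem_set // mule1 => /eqP.
apply/negP; rewrite gt_eqF //.
apply: (@lt_le_trans _ _ (`|1 / Lam|%:E)); first by rewrite lte_fin normr_gt0 mul1r invr_neq0 // lt0r_neq0.
rewrite leeDl // sume_ge0 // => p _; rewrite mule_ge0 //.
Qed.
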